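(* For $g=1$, the subspace $B_{(1)}\subset\mathfrak t_{(1)}(2)^{\times 2}$ is one-dimensional, spanned by $V=([t_{12},x^{(1)}],[t_{12},y^{(1)}])$.
   Context: $\mathbb K$ is a field of characteristic zero. For $n\ge1$, $\mathfrak t_{(1)}(n)$ is the Lie algebra generated by $x^{(i)},y^{(i)},t_{ij}$ ($1\le i,j\le n$) with relations: all $t_{ii}$ central; $t_{ij}=t_{ji}$; $[t_{ij},t_{kl}]=0$ for $i,j,k,l$ distinct; $[t_{ik}+t_{kj},t_{ij}]=0$ for $i,j,k$ distinct; $[x^{(i)},x^{(j)}]=[y^{(i)},y^{(j)}]=0$ for $i\ne j$; $[x^{(i)},y^{(j)}]=t_{ij}$ for $i\neq j$; $[x^{(i)},y^{(i)}]=-\sum_{j\neq i}t_{ij}$. For $v\in\mathfrak t_{(1)}(1)$, $v^{12}\in\mathfrak t_{(1)}(2)$ is the image under the Lie morphism with $x^{(1)}\mapsto x^{(1)}+x^{(2)}$, $y^{(1)}\mapsto y^{(1)}+y^{(2)}$, $t_{11}\mapsto t_{11}+t_{22}+t_{12}$. $B_{(1)}$ is the set of pairs $(V_a,V_b)$ for which there is $v\in\mathfrak t_{(1)}(1)$ with $V_a=[v^{12},x^{(1)}]$, $V_b=[v^{12},y^{(1)}]$. *)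

(* Defs.v *)
(* The Lie algebra t_(1)(n) is defined by generators and
   relations: formal Lie terms modulo the smallest congruence containing
   the Lie-algebra axioms (over a field K) and the defining relations. *)
From HB Require Import structures.
From mathcomp Require Import all_boot all_algebra.
Set Implicit Arguments. Unset Strict Implicit. Unset Printing Implicit Defensive.
Import GRing.Theory.
Local Open Scope ring_scope.

(* generators x^(i), y^(i), t_ij ; indices 1..n of the paper are 0..n-1 here *)
Inductive gen (n : nat) : Type :=
| gx of 'I_n
| gy of 'I_n
| gt of 'I_n & 'I_n.

Inductive lterm (K : Type) (n : nat) : Type :=
| LGen of gen n
| LZero
| LAdd of lterm K n & lterm K n
| LScale of K & lterm K n
| LBr of lterm K n & lterm K n.

Arguments LGen {K n}.
Arguments LZero {K n}.
Arguments LAdd {K n}.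
Arguments LScale {K n}.
Arguments LBr {K n}.

Definition xg {K : Type} {n : nat} (i : 'I_n) : lterm K n := LGen (gx i).
Definition yg {K : Type} {n : nat} (i : 'I_n) : lterm K n := LGen (gy i).
Definition tg {K : Type} {n : nat} (i j : 'I_n) : lterm K n := LGen (gt i j).

Definition lsum {K : Type} {n : nat} (s : seq (lterm K n)) : lterm K n :=
  foldr LAdd LZero s.

Inductive teq (K : fieldType) (n : nat) : lterm K n -> lterm K n -> Prop :=
| teq_refl a : teq a a
| teq_sym a b : teq a b -> teq b a
| teq_trans a b c : teq a b -> teq b c -> teq a c
| teq_add a a' b b' : teq a a' -> teq b b' -> teq (LAdd a b) (LAdd a' b')
| teq_scale k a a' : teq a a' -> teq (LScale k a) (LScale k a')
| teq_br a a' b b' : teq a a' -> teq b b' -> teq (LBr a b) (LBr a' b')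
| teq_addA a b c : teq (LAdd a (LAdd b c)) (LAdd (LAdd a b) c)
| teq_addC a b : teq (LAdd a b) (LAdd b a)
| teq_add0 a : teq (LAdd LZero a) a
| teq_addN a : teq (LAdd a (LScale (-1) a)) LZero
| teq_scale1 a : teq (LScale 1 a) a
| teq_scaleA k l a : teq (LScale k (LScale l a)) (LScale (k * l) a)
| teq_scaleDl k l a : teq (LScale (k + l) a) (LAdd (LScale k a) (LScale l a))
| teq_scaleDr k a b : teq (LScale k (LAdd a b)) (LAdd (LScale k a) (LScale k b))
| teq_brDl a b c : teq (LBr (LAdd a b) c) (LAdd (LBr a c) (LBr b c))
| teq_brDr a b c : teq (LBr a (LAdd b c)) (LAdd (LBr a b) (LBr a c))
| teq_brZl k a b : teq (LBr (LScale k a) b) (LScale k (LBr a b))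
| teq_brZr k a b : teq (LBr a (LScale k b)) (LScale k (LBr a b))
| teq_brvv a : teq (LBr a a) LZero
| teq_jacobi a b c :
    teq (LAdd (LBr a (LBr b c)) (LAdd (LBr b (LBr c a)) (LBr c (LBr a b)))) LZero
| teq_tii_central (i : 'I_n) a : teq (LBr (tg i i) a) LZero
| teq_tsym (i j : 'I_n) : teq (tg i j) (tg j i)
| teq_t4 (i j k l : 'I_n) : uniq [:: i; j; k; l] ->
    teq (LBr (tg i j) (tg k l)) LZero
| teq_t3 (i j k : 'I_n) : uniq [:: i; j; k] ->
    teq (LBr (LAdd (tg i k) (tg k j)) (tg i j)) LZero
| teq_xx (i j : 'I_n) : i != j -> teq (LBr (xg i) (xg j)) LZero
| teq_yy (i j : 'I_n) : i != j -> teq (LBr (yg i) (yg j)) LZero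
| teq_xy (i j : 'I_n) : i != j -> teq (LBr (xg i) (yg j)) (tg i j)
| teq_xyii (i : 'I_n) :
    teq (LBr (xg i) (yg i))
        (LScale (-1) (lsum [seq tg i j | j <- enum 'I_n & j != i])).

Fixpoint lift12 {K : Type} (v : lterm K 1) : lterm K 2 :=
  match v with
  | LGen (gx _) => LAdd (xg ord0) (xg ord_max)
  | LGen (gy _) => LAdd (yg ord0) (yg ord_max)
  | LGen (gt _ _) => LAdd (LAdd (tg ord0 ord0) (tg ord_max ord_max)) (tg ord0 ord_max)
  | LZero => LZero
  | LAdd a b => LAdd (lift12 a) (lift12 b)
  | LScale k a => LScale k (lift12 a)
  | LBr a b => LBr (lift12 a) (lift12 b)
  end.

Definition B1 (K : fieldType) (Va Vb : lterm K 2) : Prop :=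
  exists v : lterm K 1,
    teq Va (LBr (lift12 v) (xg ord0)) /\ teq Vb (LBr (lift12 v) (yg ord0)).

(* Main.v *)
Require Import Defs.
From mathcomp Require Import all_boot all_algebra.
From Stdlib Require Import Setoid Morphisms.
Import GRing.Theory.
Local Open Scope ring_scope.

#[global] Instance teq_Equiv (K : fieldType) (n : nat) : Equivalence (@teq K n).
Proof. split; [exact: teq_refl | exact: teq_sym | exact: teq_trans]. Qed.
#[global] Instance add_Proper (K : fieldType) (n : nat) :
  Proper (@teq K n ==> @teq K n ==> @teq K n) LAdd.
Proof. move=> ? ? H ? ? H'; exact: teq_add. Qed.
#[global] Instance scale_Proper (K : fieldType) (n : nat) k :
  Proper (@teq K n ==> @teq K n) (LScale k).
Proof. move=> ? ? H; exact: teq_scale. Qed.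
#[global] Instance br_Proper (K : fieldType) (n : nat) :
  Proper (@teq K n ==> @teq K n ==> @teq K n) LBr.
Proof. move=> ? ? H ? ? H'; exact: teq_br. Qed.

Section Basic.
Context {K : fieldType} {n : nat}.
Implicit Types a b c u v : lterm K n.
Local Notation "a === b" := (@teq K n a b) (at level 70).
Local Notation N u := (LScale (-1) u).

Lemma tadd0r a : LAdd LZero a === a. Proof. exact: teq_add0. Qed.
Lemma taddr0 a : LAdd a LZero === a. Proof. rewrite teq_addC tadd0r; reflexivity. Qed.
Lemma taddN a : LAdd a (N a) === LZero. Proof. exact: teq_addN. Qed.
Lemma taddNl a : LAdd (N a) a === LZero. Proof. rewrite teq_addC taddN; reflexivity. Qed.
Lemma tcancel a b c : LAdd a c === LAdd b c -> a === b.
Proof.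
move=> H; rewrite -(taddr0 a) -(taddr0 b) -(taddN c) !teq_addA H; reflexivity.
Qed.
Lemma tscale0 u : LScale 0 u === LZero.
Proof.
apply: (@tcancel _ _ (LScale 0 u)); rewrite -teq_scaleDl addr0 tadd0r; reflexivity.
Qed.
Lemma tscaler0 k : LScale k (@LZero K n) === LZero.
Proof.
apply: (@tcancel _ _ (LScale k LZero)); rewrite -teq_scaleDr !tadd0r; reflexivity.
Qed.
Lemma tbr0l u : LBr LZero u === LZero.
Proof.
apply: (@tcancel _ _ (LBr LZero u)); rewrite -teq_brDl !tadd0r; reflexivity.
Qed.
Lemma tbr0r u : LBr u LZero === LZero.
Proof.
apply: (@tcancel _ _ (LBr u LZero)); rewrite -teq_brDr !tadd0r; reflexivity.
Qed.
Lemma tNN u : N (N u) === u.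
Proof. rewrite teq_scaleA mulrNN mulr1 teq_scale1; reflexivity. Qed.
Lemma tanti a b : LBr a b === N (LBr b a).
Proof.
have H : LAdd (LBr a b) (LBr b a) === LZero.
  rewrite -(teq_brvv (LAdd a b)) teq_brDl !teq_brDr !teq_brvv tadd0r taddr0; reflexivity.
apply: (@tcancel _ _ (LBr b a)); rewrite H taddNl; reflexivity.
Qed.
Lemma tanti0 a b : LBr a b === LZero -> LBr b a === LZero.
Proof. move=> H; rewrite tanti H tscaler0; reflexivity. Qed.
End Basic.
Lemma tACA4 {K : fieldType} {n : nat} (a b c d : lterm K n) :
  teq (LAdd (LAdd a b) (LAdd c d)) (LAdd (LAdd a c) (LAdd b d)).
Proof.
rewrite -(teq_addA a b) (teq_addA b c d) (teq_addC b c) -(teq_addA c b d) (teq_addA a c); reflexivity.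
Qed.

Lemma f0 : [seq j <- enum 'I_2 | j != ord0] = [:: ord_max].
Proof. rewrite enum_ordSl enum_ordSl enum_ord0 /=. by apply/eqP. Qed.
Lemma f1 : [seq j <- enum 'I_2 | j != ord_max] = [:: ord0].
Proof. by rewrite enum_ordSl enum_ordSl enum_ord0 /=. Qed.


Section T2.
Variable (K : fieldType).
Local Notation "a === b" := (@teq K 2 a b) (at level 70).
Local Notation N u := (LScale (-1) u).
Local Notation o := (ord0 : 'I_2).
Local Notation m := (ord_max : 'I_2).
Local Notation t := (@tg K 2 o m).
Local Notation X := (LAdd (@xg K 2 o) (xg m)).
Local Notation Y := (LAdd (@yg K 2 o) (yg m)).
Local Notation T := (LAdd (LAdd (@tg K 2 o o) (tg m m)) (tg o m)).

Lemma R1 : LBr (xg o) (yg m) === t. Proof. exact: teq_xy. Qed.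
Lemma R2 : LBr (xg m) (yg o) === t.
Proof. rewrite teq_xy // teq_tsym; reflexivity. Qed.
Lemma R3 : LBr (xg o) (yg o) === N t.
Proof. rewrite teq_xyii /= f0 /= taddr0; reflexivity. Qed.
Lemma R4 : LBr (xg m) (yg m) === N t.
Proof. rewrite teq_xyii /= f1 /= taddr0 teq_tsym; reflexivity. Qed.
Lemma R5 : LBr (xg m) (xg o) === LZero. Proof. exact: teq_xx. Qed.
Lemma R6 : LBr (yg m) (yg o) === LZero. Proof. exact: teq_yy. Qed.

Lemma S1 : LBr X (xg o) === LZero.
Proof. rewrite teq_brDl teq_brvv R5 tadd0r; reflexivity. Qed.
Lemma S2 : LBr (yg m) X === LZero.
Proof. rewrite teq_brDr (tanti (yg m)) (tanti (yg m)) R1 R4 tNN teq_addC taddN; reflexivity. Qed.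
Lemma S3 : LBr (yg m) Y === LZero.
Proof. rewrite teq_brDr teq_brvv R6 taddr0; reflexivity. Qed.
Lemma S4 : LBr Y (xg o) === LZero.
Proof. rewrite teq_brDl (tanti (yg o)) (tanti (yg m)) R1 R3 tNN taddN; reflexivity. Qed.
Lemma S5 : LBr X (yg o) === LZero.
Proof. rewrite teq_brDl R3 R2 taddNl; reflexivity. Qed.
Lemma S6 : LBr Y (yg o) === LZero.
Proof. rewrite teq_brDl teq_brvv R6 taddr0; reflexivity. Qed.
Lemma S7 : LBr X t === LZero.
Proof.
have J := teq_jacobi X (xg o) (yg m).
rewrite S2 S1 tbr0r tbr0r taddr0 taddr0 R1 in J; exact: J.
Qed.
Lemma S8 : LBr Y t === LZero.
Proof.
have J := teq_jacobi Y (xg o) (yg m).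
rewrite S3 S4 tbr0r tbr0r taddr0 taddr0 R1 in J; exact: J.
Qed.
Lemma S9 : LBr X Y === LZero.
Proof. rewrite teq_brDr S5 (tanti X) S2 tscaler0 taddr0; reflexivity. Qed.
Lemma Tbr u : LBr T u === LBr t u.
Proof. rewrite !teq_brDl !teq_tii_central !tadd0r; reflexivity. Qed.

Definition comb (a b c : K) := LAdd (LScale a X) (LAdd (LScale b Y) (LScale c T)).

Lemma comb_br_l a b c u : LBr X u === LZero -> LBr Y u === LZero -> LBr T u === LZero ->
  LBr (comb a b c) u === LZero.
Proof.
move=> h1 h2 h3; rewrite /comb !teq_brDl !teq_brZl h1 h2 h3 !tscaler0 !tadd0r; reflexivity.
Qed.
Lemma genX : LBr X X === LZero /\ LBr Y X === LZero /\ LBr T X === LZero.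
Proof.
split; first exact: teq_brvv. split. apply: tanti0; exact: S9.
rewrite Tbr; apply: tanti0; exact: S7.
Qed.
Lemma genY : LBr X Y === LZero /\ LBr Y Y === LZero /\ LBr T Y === LZero.
Proof.
split; first exact: S9. split; first exact: teq_brvv.
rewrite Tbr; apply: tanti0; exact: S8.
Qed.
Lemma genT : LBr X T === LZero /\ LBr Y T === LZero /\ LBr T T === LZero.
Proof.
split; last split; last exact: teq_brvv.
- apply: tanti0; rewrite Tbr; apply: tanti0; exact: S7.
- apply: tanti0; rewrite Tbr; apply: tanti0; exact: S8.
Qed.
Lemma comb_br a b c a' b' c' : LBr (comb a b c) (comb a' b' c') === LZero.
Proof.
case: genX => [x1 [x2 x3]]; case: genY => [y1 [y2 y3]]; case: genT => [z1 [z2 z3]].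
apply: comb_br_l; apply: tanti0; apply: comb_br_l => //.
Qed.

Lemma lift_comb (v : lterm K 1) : exists a b c, lift12 v === comb a b c.
Proof.
elim: v => [g| |v1 [a1 [b1 [c1 h1]]] v2 [a2 [b2 [c2 h2]]]|k v [a [b [c h]]]
           |v1 [a1 [b1 [c1 h1]]] v2 [a2 [b2 [c2 h2]]]] /=.
- case: g => [i|i|i j] /=.
  + exists 1, 0, 0; rewrite /comb !tscale0 teq_scale1 !taddr0; reflexivity.
  + exists 0, 1, 0; rewrite /comb !tscale0 teq_scale1 !taddr0 tadd0r; reflexivity.
  + exists 0, 0, 1; rewrite /comb !tscale0 teq_scale1 !tadd0r; reflexivity.
- exists 0, 0, 0; rewrite /comb !tscale0 !taddr0; reflexivity.
- exists (a1 + a2), (b1 + b2), (c1 + c2); rewrite h1 h2 /comb !teq_scaleDl.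
  rewrite tACA4; apply: teq_add; first reflexivity.
  rewrite tACA4; reflexivity.
- exists (k * a), (k * b), (k * c); rewrite h /comb !teq_scaleDr !teq_scaleA; reflexivity.
- exists 0, 0, 0; rewrite h1 h2 comb_br /comb !tscale0 !taddr0; reflexivity.
Qed.

Lemma comb_x a b c : LBr (comb a b c) (xg o) === LScale c (LBr t (xg o)).
Proof.
rewrite /comb !teq_brDl !teq_brZl S1 S4 Tbr !tscaler0 !tadd0r; reflexivity.
Qed.
Lemma comb_y a b c : LBr (comb a b c) (yg o) === LScale c (LBr t (yg o)).
Proof.
rewrite /comb !teq_brDl !teq_brZl S5 S6 Tbr !tscaler0 !tadd0r; reflexivity.
Qed.

Lemma B1_iff (a b : lterm K 2) : B1 a b <->
  exists c : K, a === LScale c (LBr t (xg o)) /\ b === LScale c (LBr t (yg o)).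
Proof.
split.
- case=> v [ha hb]; have [a0 [b0 [c0 h]]] := lift_comb v.
  exists c0; rewrite ha hb h comb_x comb_y; split; reflexivity.
- case=> c [ha hb]; exists (LScale c (LGen (gt ord0 ord0))).
  have h : lift12 (LScale c (LGen (gt ord0 ord0))) === comb 0 0 c.
    rewrite /= /comb !tscale0 !tadd0r; reflexivity.
  rewrite h comb_x comb_y ha hb; split; reflexivity.
Qed.
End T2.

Section Ev.
Variables (K : fieldType) (R : algType K) (x y : R).
Definition evg (g : gen 2) : R :=
  match g with
  | gx i => if i == ord0 then x else - x
  | gy i => if i == ord0 then y else - y
  | gt i j => if i == j then 0 else y * x - x * y
  end.
Fixpoint ev (a : lterm K 2) : R :=
  match a with
  | LGen g => evg g
  | LZero => 0
  | LAdd a b => ev a + ev b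
  | LScale k a => k *: ev a
  | LBr a b => ev a * ev b - ev b * ev a
  end.

Lemma I2 (i : 'I_2) : i = ord0 \/ i = ord_max.
Proof. case: i => [[|[|k]] H]; [left|right|]; try exact: val_inj. by []. Qed.

Lemma zjac (V : zmodType) (p1 p2 p3 p4 p5 p6 : V) :
  p1 - p2 - (p3 - p4) + (p3 - p5 - (p6 - p2) + (p6 - p4 - (p1 - p5))) = 0.
Proof.
rewrite !opprB !addrA subrK subrK (addrAC _ _ p2) (addrAC _ _ p2) subrK.
by rewrite (addrAC _ _ (- p4)) addrK subrK subrr.
Qed.

Lemma ev_teq a0 b0 : teq a0 b0 -> ev a0 = ev b0.
Proof.
move=> h; elim: h => //=.
- by move=> a b c _ -> _ ->.
- by move=> a a' b b' _ -> _ ->.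
- by move=> k a a' _ ->.
- by move=> a a' b b' _ -> _ ->.
- by move=> a b c; rewrite addrA.
- by move=> a b; rewrite addrC.
- by move=> a; rewrite add0r.
- by move=> a; rewrite scaleN1r subrr.
- by move=> a; rewrite scale1r.
- by move=> k l a; rewrite scalerA.
- by move=> k l a; rewrite scalerDl.
- by move=> k a b; rewrite scalerDr.
- by move=> a b c; rewrite mulrDl mulrDr opprD addrACA.
- by move=> a b c; rewrite mulrDl mulrDr opprD addrACA.
- by move=> k a b; rewrite -scalerAl -scalerAr scalerBr.
- by move=> k a b; rewrite -scalerAl -scalerAr scalerBr.
- by move=> a; rewrite subrr.
- move=> a b c; rewrite !mulrBr !mulrBl !mulrA; exact: zjac.
- by move=> i a; rewrite eqxx mul0r mulr0 subrr.
- by move=> i j; rewrite eq_sym.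
- move=> i j k l; case: (I2 i) => ->; case: (I2 j) => ->; case: (I2 k) => ->; move=> /=; rewrite ?inE ?eqxx ?andbF ?orbT //=.
- move=> i j k; case: (I2 i) => ->; case: (I2 j) => ->; case: (I2 k) => ->; move=> /=; rewrite ?inE ?eqxx ?andbF ?orbT //=.
- move=> i j; case: (I2 i) => ->; case: (I2 j) => -> //= _; by rewrite mulrN mulNr subrr.
- move=> i j; case: (I2 i) => ->; case: (I2 j) => -> //= _; by rewrite mulrN mulNr subrr.
- move=> i j; case: (I2 i) => ->; case: (I2 j) => -> //= _.
  + by rewrite mulrN mulNr opprK addrC.
  + by rewrite mulrN mulNr opprK addrC.
- move=> i; case: (I2 i) => -> /=.
  + by rewrite f0 /= addr0 scaleN1r opprB.
  + by rewrite f1 /= addr0 scaleN1r opprB !mulrNN.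
Qed.
End Ev.

Section Mx.
Variable K : fieldType.
Definition i0 : 'I_3 := @Ordinal 3 0 isT.
Definition i1 : 'I_3 := @Ordinal 3 1 isT.
Definition i2 : 'I_3 := @Ordinal 3 2 isT.
Definition mx : 'M[K]_3 := delta_mx i0 i1 + delta_mx i1 i2.
Definition my : 'M[K]_3 := delta_mx i2 i2.

Lemma ev_Va_neq0 :
  @ev K _ mx my (LBr (tg ord0 ord_max) (xg ord0) : lterm K 2) != 0.
Proof.
rewrite /= -!mulmxE /mx /my !mulmxDl !mulmxDr !mul_delta_mx !mul_delta_mx_0 //.
rewrite !add0r !mul0mx !mulmx0 !mulNmx !mulmxN !mul_delta_mx ?mul_delta_mx_0 // !oppr0 !addr0 !add0r opprK.
apply/eqP => /matrixP /(_ i0 i2); rewrite !mxE /= => /eqP; by rewrite oner_eq0.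
Qed.
End Mx.

Theorem lemma11p7 (K : fieldType) (charK : [pchar K] =i pred0) :
  let Va : lterm K 2 := LBr (tg ord0 ord_max) (xg ord0) in
  let Vb : lterm K 2 := LBr (tg ord0 ord_max) (yg ord0) in
  ~ (teq Va LZero /\ teq Vb LZero) /\
  (forall a b : lterm K 2,
     B1 a b <-> exists c : K, teq a (LScale c Va) /\ teq b (LScale c Vb)).
Proof.
move=> Va Vb; rewrite /Va /Vb; split.
- case=> h _; have := @ev_teq K _ (mx K) (my K) _ _ h.
  by move/eqP: (ev_Va_neq0 K).
- move=> a b; exact: B1_iff.
Qed.
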